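(* Let $\mathcal F$ be a family of graphs in which every member has the same number $e$ of edges, and let $n$ be a positive integer. Then $x(n,\mathcal F)+e=x'(n,\mathcal F)$.
   Context: Search game: given a vertex set $V$ with $|V|=n$, an unknown edge set $E_0$ of pairs from $V$ is hidden such that the graph $(V,E_0)$ is isomorphic to some $F\in\mathcal F$ together with $n-|V(F)|$ isolated vertices. A query is a pair of vertices, answered YES if it lies in $E_0$ and NO otherwise; queries are chosen adaptively by the Questioner and answered consistently by an Adversary. $E_0$ is identified when exactly one admissible edge set is consistent with all answers. $x(n,\mathcal F)$ is the number of NO answers needed in the worst case by the best strategy to identify $E_0$ (only NO answers are counted). $x'(n,\mathcal F)$ is the total number of queries needed in the worst case by the best strategy in the variant where the game ends only when $E_0$ is identified and moreover every pair of $E_0$ has been queried. *)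

(* Defs.v *)
From mathcomp Require Import all_boot.
Set Implicit Arguments. Unset Strict Implicit. Unset Printing Implicit Defensive.

(* A family of (finite, simple) graphs: a graph is given by a number k of
   vertices (vertex set 'I_k) and an edge set, a set of subsets of 'I_k. *)
Definition graph_family := forall k : nat, {set {set 'I_k}} -> Prop.

(* E is admissible: (V, E) is isomorphic to some F in Fam together with
   n - |V(F)| isolated vertices, i.e. there is an injection phi : V(F) -> V
   mapping the edge set of F onto E. *)
Definition admissible (n : nat) (Fam : graph_family) (E : {set {set 'I_n}}) : Prop :=
  exists (k : nat) (G : {set {set 'I_k}}) (phi : 'I_k -> 'I_n),
    [/\ Fam k G, injective phi & E = [set phi @: f | f : {set 'I_k} in G]].

Definition is_pair n (p : {set 'I_n}) : bool := #|p| == 2.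

Section Game.
Variables (n : nat) (adm : {set {set 'I_n}} -> Prop).

(* E is consistent with the answers so far: Y = pairs answered YES,
   N = pairs answered NO *)
Definition consistent_with (Y N E : {set {set 'I_n}}) : Prop :=
  [/\ adm E, Y \subset E & [disjoint E & N]].

Definition consistent (Y N : {set {set 'I_n}}) : Prop :=
  exists E, consistent_with Y N E.

Definition identified_as (Y N E : {set {set 'I_n}}) : Prop :=
  consistent_with Y N E /\ forall E', consistent_with Y N E' -> E' = E.

(* win1 Y N k : from the position (Y, N), the Questioner has a strategy that
   identifies E0 whatever the (consistent) Adversary answers, receiving at
   most k NO answers. *)
Inductive win1 : {set {set 'I_n}} -> {set {set 'I_n}} -> nat -> Prop :=
| win1_done Y N k E : identified_as Y N E -> win1 Y N k
| win1_query Y N k p : is_pair p ->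
    (consistent (p |: Y) N -> win1 (p |: Y) N k) ->
    (consistent Y (p |: N) -> 0 < k /\ win1 Y (p |: N) k.-1) ->
    win1 Y N k.

(* win2 Y N k : from (Y, N), the Questioner can force, within at most k
   further queries, that E0 is identified and every pair of E0 has been
   queried. *)
Inductive win2 : {set {set 'I_n}} -> {set {set 'I_n}} -> nat -> Prop :=
| win2_done Y N k E : identified_as Y N E -> E \subset Y -> win2 Y N k
| win2_query Y N k p : is_pair p ->
    (consistent (p |: Y) N -> win2 (p |: Y) N k) ->
    (consistent Y (p |: N) -> win2 Y (p |: N) k) ->
    win2 Y N k.+1.

End Game.

Definition is_x (n : nat) (Fam : graph_family) (v : nat) : Prop :=
  win1 (@admissible n Fam) set0 set0 v /\
  forall k, win1 (@admissible n Fam) set0 set0 k -> v <= k.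

Definition is_x' (n : nat) (Fam : graph_family) (v : nat) : Prop :=
  win2 (@admissible n Fam) set0 set0 v /\
  forall k, win2 (@admissible n Fam) set0 set0 k -> v <= k.

(* Main.v *)
Require Import Defs.
From mathcomp Require Import all_boot zify.
From Stdlib Require Import Classical.
Set Implicit Arguments. Unset Strict Implicit. Unset Printing Implicit Defensive.

Section Gen.
Variables (n : nat) (adm : {set {set 'I_n}} -> Prop) (e : nat).
Hypothesis Hc : forall E, adm E -> #|E| = e.
Hypothesis Hp : forall E, adm E -> forall p, p \in E -> is_pair p.

Section Ind1.
Variable P : {set {set 'I_n}} -> {set {set 'I_n}} -> nat -> Prop.
Hypothesis Hd : forall Y N k E, identified_as adm Y N E -> P Y N k.
Hypothesis Hq : forall Y N k p, is_pair p ->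
  (consistent adm (p |: Y) N -> P (p |: Y) N k) ->
  (consistent adm Y (p |: N) -> 0 < k /\ P Y (p |: N) k.-1) -> P Y N k.
Fixpoint win1_ind' Y N k (w : win1 adm Y N k) {struct w} : P Y N k :=
  match w with
  | win1_done Y N k E h => Hd k h
  | win1_query Y N k p hp h1 h2 =>
      Hq hp (fun c => win1_ind' (h1 c))
        (fun c => match h2 c with conj a b => conj a (win1_ind' b) end)
  end.
End Ind1.

Lemma win1_mono Y N k : win1 adm Y N k -> forall k', k <= k' -> win1 adm Y N k'.
Proof.
move=> w; elim/win1_ind': Y N k / w => [Y N k E HE | Y N k p hp IHy IHn] k' Hk.
  exact: win1_done HE.
apply: win1_query hp _ _.
  by move=> C; exact: IHy C k' Hk.
move=> C; have [k0 IH] := IHn C; split; first exact: leq_trans Hk.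
by apply: IH; lia.
Qed.

Lemma win2_mono Y N k : win2 adm Y N k -> forall k', k <= k' -> win2 adm Y N k'.
Proof.
elim=> {Y N k} [Y N k E HE HEY | Y N k p hp _ IHy _ IHn] k' Hk.
  exact: win2_done HE HEY.
case: k' Hk => // k' Hk.
apply: win2_query hp _ _.
  by move=> C; exact: IHy C k' Hk.
by move=> C; exact: IHn C k' Hk.
Qed.

Lemma cons_card Y N : consistent adm Y N -> #|Y| <= e.
Proof. by case=> E [aE YE _]; rewrite -(Hc aE); exact: subset_leq_card. Qed.

Lemma identified_win2 Y N E : identified_as adm Y N E -> win2 adm Y N #|E :\: Y|.
Proof.
move Hm: #|E :\: Y| => m; elim: m Y Hm => [|m IH] Y Hm Hid.
  apply: win2_done Hid _; apply/subsetP => x xE; apply/negPn/negP => xY.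
  move/eqP: Hm; rewrite cards_eq0 => /eqP/setP/(_ x).
  by rewrite !inE xY xE.
have: 0 < #|E :\: Y| by rewrite Hm.
case/card_gt0P => p; rewrite inE => /andP[pY pE].
case: Hid => [[aE YE dE] Hu].
apply: win2_query; first exact: Hp aE p pE.
  move=> _; apply: IH.
    have ->: E :\: (p |: Y) = (E :\: Y) :\ p.
      by apply/setP => x; rewrite !inE; case: (x == p); case: (x \in Y).
    move: (cardsD1 p (E :\: Y)); rewrite Hm !inE pY pE /=; lia.
  split; first by split => //; rewrite subUset sub1set pE YE.
  move=> E' [aE' YE' dE']; apply: Hu; split => //.
  by apply: subset_trans YE'; exact: subsetUr.
move=> [E' [aE' YE' dE']].
have EE : E' = E by apply: Hu; split => //; apply: disjointWr dE'; exact: subsetUr.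
move: dE'; rewrite EE => /pred0P/(_ p); by rewrite /= !inE eqxx pE.
Qed.

Definition sz (Y : {set {set 'I_n}}) := #|Y|.
Lemma cons_sz (Y N : {set {set 'I_n}}) : consistent adm Y N -> sz Y <= e.
Proof. exact: cons_card. Qed.
Lemma cons_cardU (Y N : {set {set 'I_n}}) p : p \notin Y -> consistent adm (p |: Y) N -> sz Y < e.
Proof. by move=> pY C; have := cons_card C; rewrite cardsU1 pY. Qed.
Lemma szU (Y : {set {set 'I_n}}) p : p \notin Y -> sz (p |: Y) = (sz Y).+1.
Proof. by move=> pY; rewrite /sz cardsU1 pY. Qed.

Lemma disjU1 (E N : {set {set 'I_n}}) p : p \notin E -> [disjoint E & N] -> [disjoint E & p |: N].
Proof.
move=> pE /pred0P dE; apply/pred0P => x /=; rewrite !inE.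
case: (x =P p) => [->|_] /=; first by rewrite (negbTE pE).
by have := dE x.
Qed.

Lemma lemA (Y N : {set {set 'I_n}}) k : win1 adm Y N k -> consistent adm Y N -> win2 adm Y N (k + (e - sz Y)).
Proof.
move=> w; elim/win1_ind': Y N k / w => [Y N k E HE | Y N k p hp IHy IHn] C0.
  apply: win2_mono (identified_win2 HE) _ _.
  case: HE => [[aE YE _] _]; rewrite cardsD (setIidPr YE) (Hc aE); exact: leq_addl.
case: (boolP (p \in Y)) => pY.
  have eY : p |: Y = Y by apply/setUidPr; rewrite sub1set.
  by move: IHy; rewrite eY => /(_ C0 C0).
have [E [aE YE dE]] := C0.
have pos : 0 < k + (e - sz Y).
  case: (boolP (p \in E)) => pE.
    have C : consistent adm (p |: Y) N by exists E; split => //; rewrite subUset sub1set pE YE.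
    have := cons_cardU pY C; lia.
  have C : consistent adm Y (p |: N) by exists E; split => //; exact: disjU1.
  have [k0 _] := IHn C; lia.
rewrite -(prednK pos); apply: win2_query hp _ _.
  move=> C; have := IHy C C; have := cons_cardU pY C; rewrite szU // => HC.
  move/win2_mono => h; apply: h; lia.
move=> C; have [k0 IH] := IHn C; have h := IH C; move/win2_mono: h => h; apply: h; lia.
Qed.

Lemma lemB (Y N : {set {set 'I_n}}) k : win2 adm Y N k -> consistent adm Y N ->
  e - sz Y <= k /\ win1 adm Y N (k - (e - sz Y)).
Proof.
elim=> {Y N k} [Y N k E HE HEY | Y N k p hp _ IHy _ IHn] C0.
  case: HE => [[aE YE dE] Hu].
  have eq : Y = E by apply/eqP; rewrite eqEsubset YE HEY.
  have sY : sz Y = e by rewrite /sz eq (Hc aE).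
  rewrite sY subnn subn0; split => //.
  by apply: (@win1_done _ _ _ _ _ E); split => //; split.
case: (boolP (p \in Y)) => pY.
  have eY : p |: Y = Y by apply/setUidPr; rewrite sub1set.
  move: IHy; rewrite eY => /(_ C0 C0) [h1 h2]; split; first lia.
  move/win1_mono: h2 => h2; apply: h2; lia.
have [E [aE YE dE]] := C0.
have Hd : e - sz Y <= k.+1.
  case: (boolP (p \in E)) => pE.
    have C : consistent adm (p |: Y) N by exists E; split => //; rewrite subUset sub1set pE YE.
    have [h1 _] := IHy C C; move: h1; rewrite szU //; lia.
  have C : consistent adm Y (p |: N) by exists E; split => //; exact: disjU1.
  have [h1 _] := IHn C C; lia.
split => //; apply: win1_query hp _ _.
  move=> C; have [h1 h2] := IHy C C; move: h1 h2; have := cons_cardU pY C.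
  rewrite szU // => HC h1 h2; move/win1_mono: h2 => h2; apply: h2; lia.
move=> C; have [h1 h2] := IHn C C; split; first lia.
move/win1_mono: h2 => h2; apply: h2; lia.
Qed.

Definition unq (Y N : {set {set 'I_n}}) := [set q | is_pair q & q \notin Y :|: N].

Lemma unq_add (Y N : {set {set 'I_n}}) q :
  q \in unq Y N -> #|unq (q |: Y) N| = #|unq Y N| - 1 /\ #|unq Y (q |: N)| = #|unq Y N| - 1.
Proof.
move=> qin; have h := cardsD1 q (unq Y N); rewrite qin /= in h.
have -> : unq (q |: Y) N = unq Y N :\ q.
  by apply/setP => x; rewrite !inE; case: (x == q); rewrite ?andbF ?andbT.
have -> : unq Y (q |: N) = unq Y N :\ q.
  apply/setP => x; rewrite !inE; case: (x =P q) => [->|] /=; last by [].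
  by rewrite orbT andbF.
by split; rewrite h ?add1n subn1.
Qed.

Lemma all_pairs m Y N : #|unq Y N| = m -> consistent adm Y N -> win1 adm Y N m.
Proof.
elim: m Y N => [|m IH] Y N Hm C0.
  have [E HE] := C0.
  have key : forall E', consistent_with adm Y N E' -> E' = Y.
    move=> E' [aE' YE' dE']; apply/eqP; rewrite eqEsubset YE' andbT.
    apply/subsetP => x xE; apply/negPn/negP => xY.
    have xN : x \notin N.
      apply/negP => xN; move/pred0P: dE' => /(_ x); by rewrite /= xE xN.
    move/eqP: Hm; rewrite cards_eq0 => /eqP/setP/(_ x).
    by rewrite !inE (Hp aE' xE) (negbTE xY) (negbTE xN).
  apply: (@win1_done _ _ _ _ _ E); split => // E' HE'.
  by rewrite (key _ HE') (key _ HE).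
have: 0 < #|unq Y N| by rewrite Hm.
case/card_gt0P => q qin.
have [h1 h2] := unq_add qin.
have qp : is_pair q by move: qin; rewrite inE => /andP[].
apply: win1_query qp _ _.
  move=> C; have e1 : #|unq (q |: Y) N| = m by rewrite h1 Hm subn1.
  have W := IH _ _ e1 C.
  by move/win1_mono: W => W; apply: W.
move=> C; split => //; apply: IH => //; by rewrite h2 Hm subn1.
Qed.

Lemma minP (P : nat -> Prop) m : P m -> exists v, P v /\ forall k, P k -> v <= k.
Proof.
elim: m {-2}m (leqnn m) => [|m IH] j Hj Pj.
  by exists j; split => // k _; lia.
case: (classic (exists k, k < j /\ P k)) => [[k [kj Pk]]|H].
  by apply: (IH k) => //; lia.
exists j; split => // k Pk; case: (ltnP k j) => // kj; exfalso; apply: H; eauto.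
Qed.
End Gen.

Theorem proposition4p2 (Fam : graph_family) (e n : nat) :
  (forall k (G : {set {set 'I_k}}), Fam k G -> forall f, f \in G -> #|f| = 2) ->
  (forall k (G : {set {set 'I_k}}), Fam k G -> #|G| = e) ->
  0 < n ->
  (exists k (G : {set {set 'I_k}}), Fam k G /\ k <= n) ->
  exists v, is_x n Fam v /\ is_x' n Fam (v + e).
Proof.
move=> H2 He _ [k0 [G0 [F0 Hk0]]].
have Hc : forall E, @admissible n Fam E -> #|E| = e.
  move=> E [k [G [phi [FG iphi ->]]]].
  by rewrite card_imset ?(He _ _ FG) //; exact: imset_inj.
have Hp : forall E, @admissible n Fam E -> forall p, p \in E -> is_pair p.
  move=> E [k [G [phi [FG iphi ->]]]] p /imsetP [f fG ->].
  by rewrite /is_pair card_imset // (H2 _ _ FG f fG).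
have C0 : consistent (@admissible n Fam) set0 set0.
  exists [set (widen_ord Hk0) @: f | f : {set 'I_k0} in G0]; split.
  - exists k0, G0, (widen_ord Hk0); split => //.
    by move=> x y [] /val_inj.
  - exact: sub0set.
  - by apply/pred0P => x /=; rewrite inE andbF.
have [v [Wv Mv]] := minP (all_pairs Hp (erefl _) C0).
exists v; split; first by split.
split.
  by have := lemA Hc Hp Wv C0; rewrite /sz cards0 subn0.
move=> k Wk; have [h1 h2] := lemB Hc Wk C0.
have := Mv _ h2; rewrite /sz cards0 subn0 in h1 *; lia.
Qed.
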